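(* The vector $\lambda=(\lambda_1,\dots,\lambda_m)$, $\lambda_j:=\nu_j+a_j-j$, is dominant (i.e. $\lambda_1\ge\lambda_2\ge\dots\ge\lambda_m$) and satisfies $$\lambda_j+\lambda_{m+1-j}=w'+n-m-1$$ for all $j\neq\frac{m+1}{2}$. In the exceptional case $n\equiv m\equiv1\bmod 2$ one has $2\lambda_{(m+1)/2}=w'+n-m-2$, whereas in the non-exceptional case the displayed identity holds for all $j=1,\dots,m$ (so $\lambda\in X_0^+(m)$ then).
   Context: Let $n,m\ge1$, not both $1$. For $N\ge1$: $L_0^+(N):=\{(w,l)\in\mathbb Z\times\mathbb Z^N:\ l_1>\dots>l_N,\ l_i+l_{N+1-i}=0,\ w+l_i\equiv N+1 \bmod 2\}$; $X^+(N):=\{\mu\in\mathbb Z^N:\mu_1\ge\dots\ge\mu_N\}$; $X_0^+(N):=\{\mu\in X^+(N): \mu_i+\mu_{N+1-i}\text{ is independent of } i\}$ (purity). There is a bijection $L_0^+(N)\to X_0^+(N)$, $(w,l)\mapsto\mu$ with $\mu_i=\frac{w+l_i+2i-1-N}{2}$, with inverse $w=\mu_1+\mu_N$, $l_i=2\mu_i+N+1-w-2i$. Let $\mu\in X_0^+(n)$ and $\nu\in X_0^+(m)$ correspond to $(w,l)\in L_0^+(n)$ and $(w',l')\in L_0^+(m)$. Standing assumptions: $l_1>l'_1$, and for every pair $(i,j)$ either $l_i\ne l'_j$, or $n,m$ are both odd, $i=\frac{n+1}2$, $j=\frac{m+1}2$ (this holds whenever the associated archimedean pair has a critical number). The position tuple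 $a\in\mathbb Z^m$: $a_j$ is the unique integer in $\{1,\dots,n-1\}$ with $l_{a_j}>l'_j\ge l_{1+a_j}$. *)

(* Defs.v *)
(* integer vectors are encoded as 1-indexed functions nat -> Z,
   only the entries with index 1..N are relevant. *)
From Stdlib Require Import ZArith Arith Lia.
Open Scope Z_scope.

Definition X0plus (N : nat) (mu : nat -> Z) : Prop :=
  (forall i : nat, (1 <= i < N)%nat -> mu i >= mu (S i)) /\
  (forall i : nat, (1 <= i <= N)%nat -> mu i + mu (N + 1 - i)%nat = mu 1%nat + mu N).

Definition L0plus (N : nat) (w : Z) (l : nat -> Z) : Prop :=
  (forall i : nat, (1 <= i < N)%nat -> l i > l (S i)) /\
  (forall i : nat, (1 <= i <= N)%nat -> l i + l (N + 1 - i)%nat = 0) /\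
  (forall i : nat, (1 <= i <= N)%nat -> (w + l i - (Z.of_nat N + 1)) mod 2 = 0).

(* inverse of the bijection L_0^+(N) -> X_0^+(N):  w = mu_1 + mu_N *)
Definition w_of (N : nat) (mu : nat -> Z) : Z := mu 1%nat + mu N.

Definition l_of (N : nat) (mu : nat -> Z) (i : nat) : Z :=
  2 * mu i + Z.of_nat N + 1 - w_of N mu - 2 * Z.of_nat i.

(* forward map (w,l) |-> mu, mu_i = (w + l_i + 2i - 1 - N)/2 (exact division) *)
Definition mu_of (N : nat) (w : Z) (l : nat -> Z) (i : nat) : Z :=
  (w + l i + 2 * Z.of_nat i - 1 - Z.of_nat N) / 2.

Definition is_position_tuple (n m : nat) (l l' : nat -> Z) (a : nat -> nat) : Prop :=
  forall j : nat, (1 <= j <= m)%nat ->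
    (1 <= a j <= n - 1)%nat /\ l (a j) > l' j /\ l' j >= l (S (a j)).

Definition lam (nu : nat -> Z) (a : nat -> nat) (j : nat) : Z :=
  nu j + Z.of_nat (a j) - Z.of_nat j.

(* Main.v *)
Require Import Defs.
From Stdlib Require Import ZArith Arith Lia.
Open Scope Z_scope.

Lemma mono_k (N : nat) (mu : nat -> Z)
  (H : forall i : nat, (1 <= i < N)%nat -> mu i >= mu (S i)) :
  forall k p, (1 <= p)%nat -> (p + k <= N)%nat -> mu p >= mu (p + k)%nat.
Proof.
  induction k as [|k IH]; intros p Hp Hk.
  - rewrite Nat.add_0_r; lia.
  - specialize (IH p Hp ltac:(lia)).
    specialize (H (p + k)%nat ltac:(lia)).
    replace (p + S k)%nat with (S (p + k)) by lia. lia.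
Qed.

Lemma lmono (N : nat) (mu : nat -> Z)
  (H : forall i : nat, (1 <= i < N)%nat -> mu i >= mu (S i)) p q :
  (1 <= p)%nat -> (p <= q)%nat -> (q <= N)%nat ->
  l_of N mu p >= l_of N mu q + 2 * (Z.of_nat q - Z.of_nat p).
Proof.
  intros. pose proof (mono_k N mu H (q - p) p ltac:(lia) ltac:(lia)) as M.
  replace (p + (q - p))%nat with q in M by lia.
  unfold l_of. lia.
Qed.

Lemma lsym (N : nat) (mu : nat -> Z)
  (H : forall i : nat, (1 <= i <= N)%nat -> mu i + mu (N + 1 - i)%nat = mu 1%nat + mu N) i :
  (1 <= i <= N)%nat -> l_of N mu i + l_of N mu (N + 1 - i)%nat = 0.
Proof.
  intros Hi. specialize (H i Hi). unfold l_of, w_of. lia.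
Qed.

Lemma uniqpos (N : nat) (mu : nat -> Z)
  (H : forall i : nat, (1 <= i < N)%nat -> mu i >= mu (S i)) p r x :
  (1 <= p)%nat -> (p + 1 <= N)%nat -> (1 <= r)%nat -> (r + 1 <= N)%nat ->
  l_of N mu p > x -> x >= l_of N mu (S p) ->
  l_of N mu r > x -> x >= l_of N mu (S r) -> p = r.
Proof.
  intros. destruct (Nat.lt_total p r) as [Hl|[Hl|Hl]]; auto.
  - pose proof (lmono N mu H (S p) r ltac:(lia) ltac:(lia) ltac:(lia)). lia.
  - pose proof (lmono N mu H (S r) p ltac:(lia) ltac:(lia) ltac:(lia)). lia.
Qed.

Theorem proposition3p1 (n m : nat) (mu nu : nat -> Z) (a : nat -> nat)
  (Hn : (1 <= n)%nat) (Hm : (1 <= m)%nat) (Hnm : ~ (n = 1%nat /\ m = 1%nat))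
  (Hmu : X0plus n mu) (Hnu : X0plus m nu)
  (Hl1 : l_of n mu 1%nat > l_of m nu 1%nat)
  (Hneq : forall i j : nat, (1 <= i <= n)%nat -> (1 <= j <= m)%nat ->
     l_of n mu i <> l_of m nu j \/
     (Nat.odd n = true /\ Nat.odd m = true /\ (2 * i = n + 1)%nat /\ (2 * j = m + 1)%nat))
  (Ha : is_position_tuple n m (l_of n mu) (l_of m nu) a) :
  (forall j : nat, (1 <= j < m)%nat -> lam nu a j >= lam nu a (S j)) /\
  (forall j : nat, (1 <= j <= m)%nat -> (2 * j <> m + 1)%nat ->
     lam nu a j + lam nu a (m + 1 - j)%nat = w_of m nu + Z.of_nat n - Z.of_nat m - 1) /\
  (Nat.odd n = true /\ Nat.odd m = true ->
     2 * lam nu a ((m + 1) / 2)%nat = w_of m nu + Z.of_nat n - Z.of_nat m - 2) /\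
  (~ (Nat.odd n = true /\ Nat.odd m = true) ->
     forall j : nat, (1 <= j <= m)%nat ->
     lam nu a j + lam nu a (m + 1 - j)%nat = w_of m nu + Z.of_nat n - Z.of_nat m - 1).
Proof.
  destruct Hmu as [Mmu Pmu]. destruct Hnu as [Mnu Pnu].
  assert (Key : forall j, (1 <= j <= m)%nat ->
            l_of n mu (S (a j)) <> l_of m nu j ->
            (a j + a (m + 1 - j) = n)%nat).
  { intros j Hj Hne.
    destruct (Ha j Hj) as [Ra [Rb Rc]].
    destruct (Ha (m + 1 - j)%nat ltac:(lia)) as [Sa [Sb Sc]].
    pose proof (lsym n mu Pmu (a j) ltac:(lia)) as E1.
    pose proof (lsym n mu Pmu (S (a j)) ltac:(lia)) as E2.
    pose proof (lsym m nu Pnu j Hj) as E3.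
    replace (n + 1 - S (a j))%nat with (n - a j)%nat in E2 by lia.
    assert (n - a j = a (m + 1 - j))%nat.
    { apply (uniqpos n mu Mmu (n - a j)%nat (a (m + 1 - j)%nat) (l_of m nu (m + 1 - j)%nat));
        try lia.
      replace (S (n - a j)) with (n + 1 - a j)%nat by lia. lia. }
    lia. }
  split; [|split; [|split]].
  - intros j Hj. unfold lam.
    destruct (Ha j ltac:(lia)) as [Ra [Rb Rc]].
    destruct (Ha (S j) ltac:(lia)) as [Sa [Sb Sc]].
    assert (Hd : l_of m nu j = l_of m nu (S j) + 2 * (nu j - nu (S j)) + 2)
      by (unfold l_of; lia).
    specialize (Mnu j Hj).
    destruct (Nat.le_gt_cases (a (S j)) (a j)).
    + lia.
    + pose proof (lmono n mu Mmu (S (a j)) (a (S j)) ltac:(lia) ltac:(lia) ltac:(lia)).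
      lia.
  - intros j Hj Hj2. unfold lam, w_of.
    assert (Hk : (a j + a (m + 1 - j) = n)%nat).
    { apply Key; auto. destruct (Ha j Hj) as [Ra _].
      destruct (Hneq (S (a j)) j ltac:(lia) Hj) as [?|[_ [_ [_ ?]]]]; tauto. }
    pose proof (Pnu j Hj). lia.
  - intros [On Om].
    apply Nat.odd_spec in On. apply Nat.odd_spec in Om.
    destruct On as [k Hk]. destruct Om as [t Ht].
    set (j := ((m + 1) / 2)%nat).
    assert (Hjv : j = S t) by (unfold j; subst m; replace (2 * t + 1 + 1)%nat with (S t * 2)%nat by lia; apply Nat.div_mul; lia).
    rewrite Hjv. unfold lam, w_of.
    destruct (Ha (S t) ltac:(lia)) as [Ra [Rb Rc]].
    pose proof (lsym m nu Pnu (S t) ltac:(lia)) as E3.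
    replace (m + 1 - S t)%nat with (S t) in E3 by lia.
    pose proof (lsym n mu Pmu (S k) ltac:(lia)) as E1.
    replace (n + 1 - S k)%nat with (S k) in E1 by lia.
    assert (k >= 1)%nat by lia.
    assert (a (S t) = k).
    { apply (uniqpos n mu Mmu (a (S t)) k 0); try lia.
      pose proof (lmono n mu Mmu k (S k) ltac:(lia) ltac:(lia) ltac:(lia)). lia. }
    pose proof (Pnu (S t) ltac:(lia)) as P.
    replace (m + 1 - S t)%nat with (S t) in P by lia. lia.
  - intros Hno j Hj. unfold lam, w_of.
    assert (Hk : (a j + a (m + 1 - j) = n)%nat).
    { apply Key; auto. destruct (Ha j Hj) as [Ra _].
      destruct (Hneq (S (a j)) j ltac:(lia) Hj) as [?|[? [? _]]]; tauto. }
    pose proof (Pnu j Hj). lia.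
Qed.
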